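(* Let $C^*,C_1,C_2>0$. Let $\underline{\boldsymbol m}_h^{(1)},\underline{\boldsymbol m}_h^{(2)}\in\boldsymbol X$ with $|\underline{\boldsymbol m}_h^{(q)}|=1$ pointwise and $\|\underline{\boldsymbol m}_h^{(q)}\|_\infty+\|\nabla_h\underline{\boldsymbol m}_h^{(q)}\|_\infty\le C^*$, $q=1,2$. Let $\tilde{\boldsymbol m}_h^{(1)},\tilde{\boldsymbol m}_h^{(2)}\in\boldsymbol X$, set $\boldsymbol m_h^{(q)}=\tilde{\boldsymbol m}_h^{(q)}/|\tilde{\boldsymbol m}_h^{(q)}|$, $\boldsymbol e_h^{(q)}=\underline{\boldsymbol m}_h^{(q)}-\boldsymbol m_h^{(q)}$, $\tilde{\boldsymbol e}_h^{(q)}=\underline{\boldsymbol m}_h^{(q)}-\tilde{\boldsymbol m}_h^{(q)}$. Suppose $C_1h\le k\le C_2h$, $$\|\tilde{\boldsymbol e}_h^{(q)}\|_2\le2k^{15/8},\quad\|\nabla_h\tilde{\boldsymbol e}_h^{(q)}\|_2\le\tfrac12k^{11/8}\ (q=1,2),\qquad\|\underline{\boldsymbol m}_h^{(1)}-\underline{\boldsymbol m}_h^{(2)}\|_\infty\le\tfrac14k^{7/8}.$$ Then, for $k$ and $h$ sufficiently small, $$\big|\langle\tilde{\boldsymbol e}_h^{(1)}-\boldsymbol e_h^{(1)},\boldsymbol e_h^{(2)}\rangle\big|\le k^{5/4}\|\boldsymbol e_h^{(2)}\|_2^2+k^{1/4}\|\tilde{\boldsymbol e}_h^{(1)}-\boldsymbol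 e_h^{(1)}\|_2^2.$$
   Context: $\Omega=[0,1]^3$, $h=1/N$, cell-centered grid points $((i-\tfrac12)h,(j-\tfrac12)h,(\ell-\tfrac12)h)$, $0\le i,j,\ell\le N+1$, interior points $\Omega_h^0$ those with $1\le i,j,\ell\le N$. $\boldsymbol X$ is the space of $\mathbb R^3$-valued grid functions satisfying the discrete Neumann condition $\boldsymbol m_{0,j,\ell}=\boldsymbol m_{1,j,\ell}$, $\boldsymbol m_{N+1,j,\ell}=\boldsymbol m_{N,j,\ell}$ (and analogously in $j,\ell$). Forward differences $D_xf_{i,j,\ell}=(f_{i+1,j,\ell}-f_{i,j,\ell})/h$ (similarly $D_y,D_z$); $\nabla_h$ collects all forward differences. $\langle\boldsymbol f,\boldsymbol g\rangle=h^3\sum_{\Omega_h^0}\boldsymbol f\cdot\boldsymbol g$, $\|\boldsymbol f\|_2=\langle\boldsymbol f,\boldsymbol f\rangle^{1/2}$, $\|\boldsymbol f\|_\infty=\max_{\Omega_h^0}|\boldsymbol f|$, and $\|\nabla_h\boldsymbol f\|_2,\|\nabla_h\boldsymbol f\|_\infty$ are the analogous discrete norms of the difference quotients. *)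

(* Defs.v *)
From HB Require Import structures.
From mathcomp Require Import all_boot all_order all_algebra.
From mathcomp Require Import all_classical all_reals.
From mathcomp Require Import exp.
Set Implicit Arguments. Unset Strict Implicit. Unset Printing Implicit Defensive.
Import Order.TTheory GRing.Theory Num.Theory.
Local Open Scope ring_scope.

Section Grid.
Variable R : realType.

(* A grid function on the cell-centred grid; only indices 0..N+1 are used. *)
Definition gridfun := nat -> nat -> nat -> 'rV[R]_3.

Definition vdot (u v : 'rV[R]_3) : R := \sum_(c < 3) u 0 c * v 0 c.
Definition vnorm (u : 'rV[R]_3) : R := Num.sqrt (vdot u u).

(* discrete Neumann condition: membership in the space X *)
Definition inX (N : nat) (f : gridfun) : Prop :=
  forall a b, (a <= N.+1)%N -> (b <= N.+1)%N ->
    (f O a b = f (S O) a b /\ f N.+1 a b = f N a b) /\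
    (f a O b = f a (S O) b /\ f a N.+1 b = f a N b) /\
    (f a b O = f a b (S O) /\ f a b N.+1 = f a b N).

Definition unit_length (N : nat) (f : gridfun) : Prop :=
  forall i j l, (i <= N.+1)%N -> (j <= N.+1)%N -> (l <= N.+1)%N ->
    vnorm (f i j l) = 1.

Definition meshh (N : nat) : R := (N%:R)^-1.

Definition isum (N : nat) (F : nat -> nat -> nat -> R) : R :=
  \sum_(1 <= i < N.+1) \sum_(1 <= j < N.+1) \sum_(1 <= l < N.+1) F i j l.
Definition imax (N : nat) (F : nat -> nat -> nat -> R) : R :=
  \big[Num.max/0]_(1 <= i < N.+1) \big[Num.max/0]_(1 <= j < N.+1)
     \big[Num.max/0]_(1 <= l < N.+1) F i j l.

Definition gdot (N : nat) (f g : gridfun) : R :=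
  meshh N ^+ 3 * isum N (fun i j l => vdot (f i j l) (g i j l)).
Definition norm2 (N : nat) (f : gridfun) : R := Num.sqrt (gdot N f f).
Definition normInf (N : nat) (f : gridfun) : R :=
  imax N (fun i j l => vnorm (f i j l)).

Definition Dx (N : nat) (f : gridfun) : gridfun :=
  fun i j l => (meshh N)^-1 *: (f i.+1 j l - f i j l).
Definition Dy (N : nat) (f : gridfun) : gridfun :=
  fun i j l => (meshh N)^-1 *: (f i j.+1 l - f i j l).
Definition Dz (N : nat) (f : gridfun) : gridfun :=
  fun i j l => (meshh N)^-1 *: (f i j l.+1 - f i j l).

Definition gradsq (N : nat) (f : gridfun) (i j l : nat) : R :=
  vdot (Dx N f i j l) (Dx N f i j l) + vdot (Dy N f i j l) (Dy N f i j l)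
  + vdot (Dz N f i j l) (Dz N f i j l).
Definition gnorm2 (N : nat) (f : gridfun) : R :=
  Num.sqrt (meshh N ^+ 3 * isum N (gradsq N f)).
Definition gnormInf (N : nat) (f : gridfun) : R :=
  imax N (fun i j l => Num.sqrt (gradsq N f i j l)).

Definition gsub (f g : gridfun) : gridfun := fun i j l => f i j l - g i j l.
Definition normalize (f : gridfun) : gridfun :=
  fun i j l => (vnorm (f i j l))^-1 *: f i j l.

End Grid.

(* Main.v *)
Require Import Defs.
From HB Require Import structures.
From mathcomp Require Import all_boot all_order all_algebra.
From mathcomp Require Import all_classical all_reals.
From mathcomp Require Import exp.
From mathcomp Require Import ring lra.
Import Order.TTheory GRing.Theory Num.Theory.
Local Open Scope ring_scope.
Set Implicit Arguments. Unset Strict Implicit. Unset Printing Implicit Defensive.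
Section V.
Variable R : realType.
Implicit Types u v w : 'rV[R]_3.

Lemma vdotE u v : vdot u v = u 0 0 * v 0 0 + u 0 1 * v 0 1 + u 0 2%:R * v 0 2%:R.
Proof.
rewrite /vdot !big_ord_recr big_ord0 /= add0r.
by congr (_ + _ + _); congr (_ * _); congr (_ _ _); apply/val_inj.
Qed.

Lemma vdotC u v : vdot u v = vdot v u.
Proof. rewrite !vdotE; ring. Qed.
Lemma vdotDl u v w : vdot (u + v) w = vdot u w + vdot v w.
Proof. rewrite !vdotE !mxE; ring. Qed.
Lemma vdotBl u v w : vdot (u - v) w = vdot u w - vdot v w.
Proof. rewrite !vdotE !mxE; ring. Qed.
Lemma vdotZl (c : R) u w : vdot (c *: u) w = c * vdot u w.
Proof. rewrite !vdotE !mxE; ring. Qed.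
Lemma vdotDr u v w : vdot w (u + v) = vdot w u + vdot w v.
Proof. by rewrite vdotC vdotDl !(vdotC w). Qed.
Lemma vdotBr u v w : vdot w (u - v) = vdot w u - vdot w v.
Proof. by rewrite vdotC vdotBl !(vdotC w). Qed.
Lemma vdotZr (c : R) u w : vdot w (c *: u) = c * vdot w u.
Proof. by rewrite vdotC vdotZl vdotC. Qed.
Lemma vdot_ge0 u : 0 <= vdot u u.
Proof. rewrite vdotE; nra. Qed.
Lemma vdot_cs u v : vdot u v ^+ 2 <= vdot u u * vdot v v.
Proof.
rewrite !vdotE.
set a := u 0 0; set b := u 0 1; set c := u 0 2%:R.
set x := v 0 0; set y := v 0 1; set z := v 0 2%:R.
have: 0 <= (a*y-b*x)^+2 + (a*z-c*x)^+2 + (b*z-c*y)^+2.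
  by rewrite !addr_ge0 // sqr_ge0.
move=> H; nra.
Qed.

Lemma vnorm_ge0 u : 0 <= vnorm u.
Proof. exact: sqrtr_ge0. Qed.
Lemma vnorm_sq u : vnorm u ^+ 2 = vdot u u.
Proof. by rewrite /vnorm sqr_sqrtr // vdot_ge0. Qed.

Lemma sq_le_le (a b : R) : 0 <= b -> a ^+ 2 <= b ^+ 2 -> a <= b.
Proof. move=> hb h; nra. Qed.

Lemma vdot_le u v : `|vdot u v| <= vnorm u * vnorm v.
Proof.
apply: sq_le_le; first by rewrite mulr_ge0 // vnorm_ge0.
by rewrite real_normK ?num_real // exprMn !vnorm_sq vdot_cs.
Qed.

Lemma vnormD u v : vnorm (u + v) <= vnorm u + vnorm v.
Proof.
apply: sq_le_le; first by rewrite addr_ge0 // vnorm_ge0.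
rewrite vnorm_sq vdotDl !vdotDr (vdotC v u).
have := vdot_le u v; have := vnorm_sq u; have := vnorm_sq v.
move=> h1 h2 h3.
have : vdot u v <= vnorm u * vnorm v by apply: le_trans (ler_norm _) h3.
move=> h4; nra.
Qed.

Lemma vnormZ (c : R) u : vnorm (c *: u) = `|c| * vnorm u.
Proof.
by rewrite /vnorm vdotZl vdotZr mulrA -expr2 sqrtrM ?sqr_ge0 // sqrtr_sqr.
Qed.

Lemma vnormN u : vnorm (- u) = vnorm u.
Proof. by rewrite -scaleN1r vnormZ normrN normr1 mul1r. Qed.

Lemma vnormB u v : vnorm (u - v) = vnorm (v - u).
Proof. by rewrite -vnormN opprB. Qed.

Lemma vnorm_rev u v : `|vnorm u - vnorm v| <= vnorm (u - v).
Proof.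
have h1 : vnorm u <= vnorm (u - v) + vnorm v by rewrite -{1}(subrK v u) vnormD.
have h2 : vnorm v <= vnorm (u - v) + vnorm u.
  by rewrite vnormB -{1}(subrK u v) vnormD.
rewrite ler_norml; apply/andP; split; lra.
Qed.

End V.
Section P.
Variable R : realType.
Implicit Types u v w : 'rV[R]_3.

Lemma unit_normalize (t : 'rV[R]_3) (d : R) : vnorm t = 1 + d -> `|d| < 1 ->
  vnorm ((vnorm t)^-1 *: t) = 1 /\ t = vnorm t *: ((vnorm t)^-1 *: t).
Proof.
move=> ht hd.
have hp : 0 < vnorm t by rewrite ht; move: hd; rewrite ltr_norml; case/andP => *; lra.
split.
  by rewrite vnormZ gtr0_norm ?invr_gt0 // mulVf // gt_eqF.
by rewrite scalerA mulfV ?gt_eqF // scale1r.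
Qed.

Lemma pointwise (u t v s : 'rV[R]_3) (r d : R) :
  vnorm u = 1 -> vnorm v = 1 -> vnorm (u - t) <= d -> vnorm (v - s) <= d ->
  vnorm (u - v) <= r ^+ 7 / 4 -> 0 < r -> d <= 1/5 ->
  5 * d + r ^+ 7 / 4 <= 2 * r ^+ 6 ->
  `|vdot ((u - t) - (u - (vnorm t)^-1 *: t)) (v - (vnorm s)^-1 *: s)|
   <= r ^+ 10 * vdot (v - (vnorm s)^-1 *: s) (v - (vnorm s)^-1 *: s)
      + r ^+ 2 * vdot ((u - t) - (u - (vnorm t)^-1 *: t))
                      ((u - t) - (u - (vnorm t)^-1 *: t)).
Proof.
move=> hu hv hut hvs huv hr hd hX.
have d0 : 0 <= d by apply: le_trans hut; apply: vnorm_ge0.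
have ht : `|vnorm t - 1| <= d.
  by have h := vnorm_rev t u; rewrite hu (vnormB t u) in h; apply: le_trans h hut.
have hs : `|vnorm s - 1| <= d.
  by have h := vnorm_rev s v; rewrite hv (vnormB s v) in h; apply: le_trans h hvs.
set nt := vnorm t in ht *; set ns := vnorm s in hs *.
have [hm1 ht'] : vnorm (nt^-1 *: t) = 1 /\ t = nt *: (nt^-1 *: t).
  apply: (@unit_normalize t (nt - 1)); first by rewrite /nt; ring.
  by apply: le_lt_trans ht _; lra.
have [hm2 hs'] : vnorm (ns^-1 *: s) = 1 /\ s = ns *: (ns^-1 *: s).
  apply: (@unit_normalize s (ns - 1)); first by rewrite /ns; ring.
  by apply: le_lt_trans hs _; lra.
set m1 := nt^-1 *: t in hm1 ht' *; set m2 := ns^-1 *: s in hm2 hs' *.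
set lam := 1 - nt.
have ha : (u - t) - (u - m1) = lam *: m1.
  by rewrite {1}ht' /lam scalerBl scale1r; apply/rowP => i; rewrite !mxE; ring.
rewrite ha.
set e := v - m2.
have vm2 : vdot m2 m2 = 1 by rewrite -vnorm_sq hm2 expr1n.
have vm1 : vdot m1 m1 = 1 by rewrite -vnorm_sq hm1 expr1n.
have vvv : vdot v v = 1 by rewrite -vnorm_sq hv expr1n.
have hee : vdot e e = 2 - 2 * vdot m2 v.
  rewrite /e vdotBl !vdotBr vvv vm2 (vdotC v m2); ring.
have hm2e : vdot m2 e = - (vdot e e) / 2.
  rewrite hee /e vdotBr vm2; lra.
have hne : vnorm e <= 2 * d.
  have Ee : e = (v - s) + (s - m2) by rewrite /e; apply/rowP => i; rewrite !mxE; ring.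
  rewrite Ee; apply: le_trans (vnormD _ _) _.
  have -> : s - m2 = (ns - 1) *: m2 by rewrite {1}hs' scalerBl scale1r; apply/rowP => i; rewrite !mxE; ring.
  rewrite vnormZ hm2 mulr1; lra.
have hm12 : vnorm (m1 - m2) <= 4 * d + r ^+ 7 / 4.
  have -> : m1 - m2 = (m1 - t) + ((u - v) + (t - u + e)) by rewrite /e; apply/rowP => i; rewrite !mxE; ring.
  apply: le_trans (vnormD _ _) _.
  have -> : m1 - t = (1 - nt) *: m1 by rewrite {1}ht' scalerBl scale1r; apply/rowP => i; rewrite !mxE; ring.
  rewrite vnormZ hm1 mulr1.
  have h1 := vnormD (u - v) (t - u + e).
  have h2 := vnormD (t - u) e.
  have h3 : vnorm (t - u) <= d by rewrite vnormB.
  have h4 : `|1 - nt| <= d by rewrite distrC.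
  lra.
have hm1e : `|vdot m1 e| <= 2 * r ^+ 6 * vnorm e.
  have -> : vdot m1 e = vdot m2 e + vdot (m1 - m2) e by rewrite vdotBl; ring.
  rewrite hm2e.
  have h1 := vdot_le (m1 - m2) e.
  have h2 : vdot e e = vnorm e ^+ 2 by rewrite vnorm_sq.
  have h3 := vnorm_ge0 e.
  have h4 := vnorm_ge0 (m1 - m2).
  rewrite h2.
  apply: le_trans (ler_normD _ _) _.
  rewrite mulNr normrN (ger0_norm (x := vnorm e ^+ 2 / 2)); last by rewrite divr_ge0 // sqr_ge0.
  have h5 : vnorm (m1 - m2) * vnorm e <= (4 * d + r ^+ 7 / 4) * vnorm e.
    by apply: ler_wpM2r.
  have h6 : vnorm e ^+ 2 / 2 <= d * vnorm e.
    rewrite expr2; nra.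
  nra.
rewrite (vdotZl lam m1 e) (vdotZl lam m1) (vdotZr lam m1 m1) vm1 mulr1 normrM.
have hee2 : vdot e e = vnorm e ^+ 2 by rewrite vnorm_sq.
rewrite hee2.
have := vnorm_ge0 e => he0.
have hl : `|lam| * `|vdot m1 e| <= `|lam| * (2 * r ^+ 6 * vnorm e).
  by apply: ler_wpM2l.
have hsq : 0 <= (r * `|lam| - r ^+ 5 * vnorm e) ^+ 2 by apply: sqr_ge0.
have hl2 : lam * lam = `|lam| ^+ 2 by rewrite real_normK ?num_real // expr2.
rewrite hl2.
apply: le_trans hl _.
set l := `|lam| in hsq *; set n := vnorm e in hsq *.
have E : (r * l - r ^+ 5 * n) ^+ 2 = r ^+ 2 * l ^+ 2 + r ^+ 10 * n ^+ 2 - l * (2 * r ^+ 6 * n).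
  by ring.
rewrite E in hsq.
lra.
Qed.
End P.
Section S.
Variable R : realType.

Lemma sqrt_sum_le (p q P Q : R) : 0 <= p -> 0 <= q -> 0 <= P -> 0 <= Q ->
  p * q + P * Q <= Num.sqrt (p ^+ 2 + P ^+ 2) * Num.sqrt (q ^+ 2 + Q ^+ 2).
Proof.
move=> hp hq hP hQ.
apply: sq_le_le; first by rewrite mulr_ge0 // sqrtr_ge0.
rewrite exprMn !sqr_sqrtr ?addr_ge0 ?sqr_ge0 //.
have : 0 <= (p * Q - P * q) ^+ 2 by apply: sqr_ge0.
move=> h; nra.
Qed.

Lemma cs_sum (I : Type) (r : seq I) (a F G : I -> R) :
  (forall i, 0 <= F i) -> (forall i, 0 <= G i) ->
  (forall i, a i <= Num.sqrt (F i) * Num.sqrt (G i)) ->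
  \sum_(i <- r) a i <= Num.sqrt (\sum_(i <- r) F i) * Num.sqrt (\sum_(i <- r) G i).
Proof.
move=> hF hG ha; elim: r => [|x r IH].
  by rewrite !big_nil sqrtr0 mulr0.
rewrite !big_cons.
apply: le_trans (lerD (ha x) IH) _.
have hF' : 0 <= \sum_(i <- r) F i by apply: sumr_ge0.
have hG' : 0 <= \sum_(i <- r) G i by apply: sumr_ge0.
have := sqrt_sum_le (sqrtr_ge0 (F x)) (sqrtr_ge0 (G x)) (sqrtr_ge0 (\sum_(i <- r) F i))
   (sqrtr_ge0 (\sum_(i <- r) G i)).
by rewrite !sqr_sqrtr.
Qed.

Lemma cs_sum2 (I : Type) (r : seq I) (f g : I -> R) :
  (forall i, 0 <= f i) -> (forall i, 0 <= g i) ->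
  \sum_(i <- r) f i * g i <=
  Num.sqrt (\sum_(i <- r) f i ^+ 2) * Num.sqrt (\sum_(i <- r) g i ^+ 2).
Proof.
move=> hf hg; apply: cs_sum => i; rewrite ?sqr_ge0 //.
by rewrite !sqrtr_sqr !ger0_norm.
Qed.

Lemma LW (s : seq nat) (al be ga : nat -> nat -> R) :
  (forall y z, 0 <= al y z) -> (forall x z, 0 <= be x z) -> (forall x y, 0 <= ga x y) ->
  \sum_(x <- s) \sum_(y <- s) \sum_(z <- s) al y z * be x z * ga x y <=
  Num.sqrt (\sum_(y <- s) \sum_(z <- s) al y z ^+ 2) *
  Num.sqrt (\sum_(x <- s) \sum_(z <- s) be x z ^+ 2) *
  Num.sqrt (\sum_(x <- s) \sum_(y <- s) ga x y ^+ 2).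
Proof.
move=> ha hb hg.
set A := fun y => \sum_(z <- s) al y z ^+ 2.
set B := fun x => \sum_(z <- s) be x z ^+ 2.
set C := fun x => \sum_(y <- s) ga x y ^+ 2.
have hA : forall y, 0 <= A y by move=> y; apply: sumr_ge0 => *; apply: sqr_ge0.
have hB : forall x, 0 <= B x by move=> y; apply: sumr_ge0 => *; apply: sqr_ge0.
have hC : forall x, 0 <= C x by move=> y; apply: sumr_ge0 => *; apply: sqr_ge0.
have step1 : forall x y, \sum_(z <- s) al y z * be x z * ga x y <=
    ga x y * Num.sqrt (A y) * Num.sqrt (B x).
  move=> x y; rewrite -mulr_suml mulrC -mulrA; apply: ler_wpM2l => //.
  exact: cs_sum2.
have step2 : forall x, \sum_(y <- s) \sum_(z <- s) al y z * be x z * ga x y <=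
    Num.sqrt (B x) * (Num.sqrt (C x) * Num.sqrt (\sum_(y <- s) A y)).
  move=> x; apply: le_trans (ler_sum _ (fun y _ => step1 x y)) _.
  rewrite -mulr_suml mulrC; apply: ler_wpM2l; first exact: sqrtr_ge0.
  have := @cs_sum2 nat s (fun y => ga x y) (fun y => Num.sqrt (A y)) (hg x) (fun y => sqrtr_ge0 _).
  rewrite /C.
  by under [in X in _ <= _ * Num.sqrt X -> _]eq_bigr do rewrite sqr_sqrtr //.
apply: le_trans (ler_sum _ (fun x _ => step2 x)) _.
under eq_bigr do rewrite mulrA.
rewrite -mulr_suml mulrC -!mulrA; apply: ler_wpM2l; first exact: sqrtr_ge0.
have := @cs_sum2 nat s (fun x => Num.sqrt (B x)) (fun x => Num.sqrt (C x)) (fun _ => sqrtr_ge0 _) (fun _ => sqrtr_ge0 _).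
have eB : \sum_(i <- s) Num.sqrt (B i) ^+ 2 = \sum_(i <- s) B i.
  by apply: eq_bigr => i _; rewrite sqr_sqrtr.
have eC : \sum_(i <- s) Num.sqrt (C i) ^+ 2 = \sum_(i <- s) C i.
  by apply: eq_bigr => i _; rewrite sqr_sqrtr.
by rewrite eB eC.
Qed.
End S.
Section L.
Variable R : realType.

Lemma sub_range_le (F : nat -> R) a b c : (a <= b <= c)%N -> (forall i, 0 <= F i) ->
  \sum_(a <= m < b) F m <= \sum_(a <= m < c) F m.
Proof.
move=> /andP [hab hbc] hF; rewrite (big_cat_nat hab hbc) /= lerDl.
by apply: sumr_ge0.
Qed.

Lemma line_ineq (N : nat) (g : nat -> R) i : (0 < N)%N -> (1 <= i <= N)%N ->
  g i <= (N%:R)^-1 * \sum_(1 <= j < N.+1) g j + 2 * \sum_(1 <= m < N) `|g m.+1 - g m|.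
Proof.
move=> hN hi.
set TV := \sum_(1 <= m < N) `|g m.+1 - g m|.
have diff : forall i, (1 <= i <= N)%N -> `|g i - g 1%N| <= TV.
  move=> j /andP [h1 h2].
  rewrite -(telescope_sumr g h1).
  apply: le_trans (ler_norm_sum _ _ _) _.
  apply: sub_range_le => //; by rewrite h1 h2.
have hj : forall j, (1 <= j < N.+1)%N -> g i <= g j + 2 * TV.
  move=> j hj; have := diff i hi; have := diff j hj.
  rewrite !ler_norml => /andP [? ?] /andP [? ?]; lra.
have hs := ler_sum_nat hj.
rewrite big_split /= sumr_const_nat sumr_const_nat subn1 /= in hs.
have hN' : 0 < (N%:R : R) by rewrite ltr0n.
rewrite -mulr_natr in hs.
rewrite -(@ler_pM2l _ N%:R) // mulrDr mulrA mulfV ?gt_eqF // mul1r.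
rewrite -mulr_natr in hs; lra.
Qed.
End L.
Section T.
Variable R : realType.
Implicit Types u v : 'rV[R]_3.

Lemma pt_g u v :
  `|vdot u u ^+ 2 - vdot v v ^+ 2| <=
  Num.sqrt (vdot (u - v) (u - v)) * Num.sqrt (8 * (vdot u u ^+ 3 + vdot v v ^+ 3)).
Proof.
set a := vdot u u; set b := vdot v v.
have ha : 0 <= a by apply: vdot_ge0.
have hb : 0 <= b by apply: vdot_ge0.
have e1 : a ^+ 2 - b ^+ 2 = vdot (u - v) (u + v) * (a + b).
  by rewrite /a /b !vdotE !mxE; ring.
have e2 : vdot (u + v) (u + v) + vdot (u - v) (u - v) = 2 * (a + b).
  by rewrite /a /b !vdotE !mxE; ring.
have h0 := vdot_ge0 (u - v).
have h1 := vdot_le (u - v) (u + v).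
rewrite e1 normrM (ger0_norm (x := a + b)) ?addr_ge0 //.
apply: le_trans (ler_wpM2r (addr_ge0 ha hb) h1) _.
rewrite -mulrA; apply: ler_wpM2l; first exact: vnorm_ge0.
apply: sq_le_le; first exact: sqrtr_ge0.
rewrite sqr_sqrtr; last by rewrite mulr_ge0 // addr_ge0 // exprn_ge0.
rewrite exprMn vnorm_sq.
have h2 : vdot (u + v) (u + v) <= 2 * (a + b) by lra.
have h3 : 0 <= 3 * (a + b) * (a - b) ^+ 2 by rewrite mulr_ge0 ?sqr_ge0 // mulr_ge0 // addr_ge0.
have h4 : (a + b) ^+ 2 * vdot (u + v) (u + v) <= (a + b) ^+ 2 * (2 * (a + b)).
  by apply: ler_wpM2l; rewrite ?sqr_ge0.
rewrite mulrC; apply: le_trans h4 _.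
have -> : (a + b) ^+ 2 * (2 * (a + b)) = 8 * (a ^+ 3 + b ^+ 3) - 2 * (3 * (a + b) * (a - b) ^+ 2).
  by ring.
lra.
Qed.

Lemma shift_le (N : nat) (F : nat -> R) : (forall i, 0 <= F i) ->
  \sum_(1 <= x < N) F x.+1 <= \sum_(1 <= x < N.+1) F x.
Proof.
move=> hF; case: N => [|n].
  by rewrite big_geq // sumr_ge0.
have -> : \sum_(1 <= x < n.+1) F x.+1 = \sum_(2 <= x < n.+2) F x by rewrite [RHS]big_add1.
by rewrite (@big_cat_nat _ _ _ 2 1 n.+2) //= big_nat1 lerDr.
Qed.

Definition wf (phi : nat -> nat -> nat -> 'rV[R]_3) x a b := vdot (phi x a b) (phi x a b).

Lemma tv_bound (N : nat) (phi : nat -> nat -> nat -> 'rV[R]_3) :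
  let w := wf phi in
  \sum_(1 <= a < N.+1) \sum_(1 <= b < N.+1) \sum_(1 <= x < N)
     `|w x.+1 a b ^+ 2 - w x a b ^+ 2|
  <= 4 * Num.sqrt (\sum_(1 <= a < N.+1) \sum_(1 <= b < N.+1) \sum_(1 <= x < N.+1) w x a b ^+ 3)
       * Num.sqrt (\sum_(1 <= a < N.+1) \sum_(1 <= b < N.+1) \sum_(1 <= x < N)
           vdot (phi x.+1 a b - phi x a b) (phi x.+1 a b - phi x a b)).
Proof.
rewrite /=; set w := wf phi.
have hw : forall x a b, 0 <= w x a b by move=> *; apply: vdot_ge0.
set G := fun x a b => 8 * (w x.+1 a b ^+ 3 + w x a b ^+ 3).
set F := fun x a b => vdot (phi x.+1 a b - phi x a b) (phi x.+1 a b - phi x a b).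
have hF : forall x a b, 0 <= F x a b by move=> *; apply: vdot_ge0.
have hG : forall x a b, 0 <= G x a b.
  by move=> *; rewrite /G mulr_ge0 // addr_ge0 // exprn_ge0.
have c1 : forall a b, \sum_(1 <= x < N) `|w x.+1 a b ^+ 2 - w x a b ^+ 2| <=
   Num.sqrt (\sum_(1 <= x < N) F x a b) * Num.sqrt (\sum_(1 <= x < N) G x a b).
  move=> a b; apply: cs_sum => [x|x|x]; [exact: hF|exact: hG|exact: pt_g].
have c2 : forall a, \sum_(1 <= b < N.+1) \sum_(1 <= x < N) `|w x.+1 a b ^+ 2 - w x a b ^+ 2| <=
   Num.sqrt (\sum_(1 <= b < N.+1) \sum_(1 <= x < N) F x a b) *
   Num.sqrt (\sum_(1 <= b < N.+1) \sum_(1 <= x < N) G x a b).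
  move=> a; apply: cs_sum => [b|b|b]; [exact: sumr_ge0|exact: sumr_ge0|exact: c1].
have c3 : \sum_(1 <= a < N.+1) \sum_(1 <= b < N.+1) \sum_(1 <= x < N) `|w x.+1 a b ^+ 2 - w x a b ^+ 2| <=
   Num.sqrt (\sum_(1 <= a < N.+1) \sum_(1 <= b < N.+1) \sum_(1 <= x < N) F x a b) *
   Num.sqrt (\sum_(1 <= a < N.+1) \sum_(1 <= b < N.+1) \sum_(1 <= x < N) G x a b).
  apply: cs_sum => [a|a|a]; [| |exact: c2].
    by apply: sumr_ge0 => *; apply: sumr_ge0 => *; apply: hF.
  by apply: sumr_ge0 => *; apply: sumr_ge0 => *; apply: hG.
apply: le_trans c3 _.
rewrite mulrC; apply: ler_wpM2r; first exact: sqrtr_ge0.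
have -> : 4 = Num.sqrt (16 : R).
  by rewrite (_ : 16 = 4 ^+ 2) ?sqrtr_sqr ?ger0_norm //; ring.
rewrite -sqrtrM // ler_sqrt; last first.
  rewrite mulr_ge0 //; apply: sumr_ge0 => *; apply: sumr_ge0 => *; apply: sumr_ge0 => *.
  exact: exprn_ge0.
rewrite mulr_sumr; apply: ler_sum => a _.
rewrite mulr_sumr; apply: ler_sum => b _.
rewrite /G -mulr_sumr big_split /=.
have s1 : \sum_(1 <= x < N) w x.+1 a b ^+ 3 <= \sum_(1 <= x < N.+1) w x a b ^+ 3.
  by apply: shift_le => x; exact: exprn_ge0.
have s2 : \sum_(1 <= x < N) w x a b ^+ 3 <= \sum_(1 <= x < N.+1) w x a b ^+ 3.
  case: (leqP 1 N) => h1.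
    by apply: sub_range_le => [|i]; [rewrite h1 leqnSn|exact: exprn_ge0].
  rewrite big_geq; last by apply: ltnW.
  by apply: sumr_ge0 => *; exact: exprn_ge0.
simpl in s1; lra.
Qed.
End T.
Section Sob.
Variable R : realType.

Lemma term_le_sum (F : nat -> R) a b i : (a <= i < b)%N -> (forall j, 0 <= F j) ->
  F i <= \sum_(a <= j < b) F j.
Proof.
move=> /andP [hai hib] hF.
rewrite (big_cat_nat hai (ltnW hib)) /= (big_ltn hib).
rewrite addrCA lerDl addr_ge0 //; exact: sumr_ge0.
Qed.

Lemma sum3_ge0 (A B C : seq nat) (F : nat -> nat -> nat -> R) :
  (forall x y z, 0 <= F x y z) ->
  0 <= \sum_(x <- A) \sum_(y <- B) \sum_(z <- C) F x y z.
Proof. by move=> h; do 2 (apply: sumr_ge0 => * ); apply: sumr_ge0 => *. Qed.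

Lemma reord_yzx (a1 b1 a2 b2 a3 b3 : nat) (F : nat -> nat -> nat -> R) :
  \sum_(a2 <= y < b2) \sum_(a3 <= z < b3) \sum_(a1 <= x < b1) F x y z =
  \sum_(a1 <= x < b1) \sum_(a2 <= y < b2) \sum_(a3 <= z < b3) F x y z.
Proof.
under eq_bigr do rewrite exchange_big_nat.
by rewrite exchange_big_nat.
Qed.

Lemma reord_xzy (a1 b1 a2 b2 a3 b3 : nat) (F : nat -> nat -> nat -> R) :
  \sum_(a1 <= x < b1) \sum_(a3 <= z < b3) \sum_(a2 <= y < b2) F x y z =
  \sum_(a1 <= x < b1) \sum_(a2 <= y < b2) \sum_(a3 <= z < b3) F x y z.
Proof. by under eq_bigr do rewrite exchange_big_nat. Qed.

Lemma split2 (s : seq nat) (k : R) (A T : nat -> nat -> R) :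
  \sum_(b <- s) \sum_(c <- s) (k * A b c + 2 * T b c) =
  k * \sum_(b <- s) \sum_(c <- s) A b c + 2 * \sum_(b <- s) \sum_(c <- s) T b c.
Proof.
rewrite !mulr_sumr -big_split; apply: eq_bigr => b _.
by rewrite !mulr_sumr -big_split.
Qed.

Definition ex2 (f : gridfun R) x y z := vdot (f x.+1 y z - f x y z) (f x.+1 y z - f x y z).
Definition ey2 (f : gridfun R) x y z := vdot (f x y.+1 z - f x y z) (f x y.+1 z - f x y z).
Definition ez2 (f : gridfun R) x y z := vdot (f x y z.+1 - f x y z) (f x y z.+1 - f x y z).
Definition Esum N (f : gridfun R) := isum N (fun x y z => ex2 f x y z + ey2 f x y z + ez2 f x y z).

Lemma isum_mono N (F G : nat -> nat -> nat -> R) :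
  (forall x y z, F x y z <= G x y z) -> isum N F <= isum N G.
Proof.
move=> h; rewrite /isum; apply: ler_sum => x _; apply: ler_sum => y _; apply: ler_sum => z _.
exact: h.
Qed.

Lemma Esum_ge0 N f : 0 <= Esum N f.
Proof. by rewrite /Esum /isum; apply: sum3_ge0 => *; rewrite /ex2 /ey2 /ez2 !addr_ge0 // vdot_ge0. Qed.

Lemma ex2_le N f : (0 < N)%N ->
  \sum_(1 <= x < N) \sum_(1 <= y < N.+1) \sum_(1 <= z < N.+1) ex2 f x y z <= Esum N f.
Proof.
move=> hN; apply: le_trans (_ : isum N (ex2 f) <= _).
  apply: sub_range_le; first by rewrite hN leqnSn.
  by move=> i; apply: sumr_ge0 => *; apply: sumr_ge0 => *; exact: vdot_ge0.
apply: isum_mono => x y z; rewrite -addrA lerDl addr_ge0 //; exact: vdot_ge0.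
Qed.

Lemma ey2_le N f : (0 < N)%N ->
  \sum_(1 <= x < N.+1) \sum_(1 <= y < N) \sum_(1 <= z < N.+1) ey2 f x y z <= Esum N f.
Proof.
move=> hN; apply: le_trans (_ : isum N (ey2 f) <= _).
  apply: ler_sum => x _.
  apply: sub_range_le; first by rewrite hN leqnSn.
  by move=> i; apply: sumr_ge0 => *; rewrite /ey2 vdot_ge0.
apply: isum_mono => x y z; rewrite addrAC lerDr addr_ge0 //; exact: vdot_ge0.
Qed.

Lemma ez2_le N f : (0 < N)%N ->
  \sum_(1 <= x < N.+1) \sum_(1 <= y < N.+1) \sum_(1 <= z < N) ez2 f x y z <= Esum N f.
Proof.
move=> hN; apply: le_trans (_ : isum N (ez2 f) <= _).
  apply: ler_sum => x _; apply: ler_sum => y _.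
  apply: sub_range_le; first by rewrite hN leqnSn.
  by move=> i; rewrite /ez2 vdot_ge0.
apply: isum_mono => x y z; rewrite lerDr addr_ge0 //; exact: vdot_ge0.
Qed.

End Sob.
Section Sob2.
Variable R : realType.

Lemma sobolev N (f : gridfun R) x y z : (0 < N)%N ->
  (1 <= x <= N)%N -> (1 <= y <= N)%N -> (1 <= z <= N)%N ->
  wf f x y z <= (Num.sqrt (isum N (wf f)) / N%:R + 8 * Num.sqrt (Esum N f)) ^+ 2.
Proof.
move=> hN hx hy hz.
pose w := wf f.
have hw : forall a b c, 0 <= w a b c by move=> *; apply: vdot_ge0.
pose P := isum N (fun a b c => w a b c ^+ 3).
pose Q := isum N (fun a b c => w a b c ^+ 2).
pose S1 := isum N w.
pose E := Esum N f.
have hP : 0 <= P by apply: sum3_ge0 => *; apply: exprn_ge0.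
have hS1 : 0 <= S1 by apply: sum3_ge0 => *.
have hE : 0 <= E by apply: Esum_ge0.
have hNr : 0 < (N%:R : R) by rewrite ltr0n.
pose TV1 := fun b c => \sum_(1 <= a < N) `|w a.+1 b c ^+ 2 - w a b c ^+ 2|.
pose TV2 := fun a c => \sum_(1 <= b < N) `|w a b.+1 c ^+ 2 - w a b c ^+ 2|.
pose TV3 := fun a b => \sum_(1 <= c < N) `|w a b c.+1 ^+ 2 - w a b c ^+ 2|.
pose G1 := fun b c => N%:R^-1 * \sum_(1 <= a < N.+1) w a b c ^+ 2 + 2 * TV1 b c.
pose G2 := fun a c => N%:R^-1 * \sum_(1 <= b < N.+1) w a b c ^+ 2 + 2 * TV2 a c.
pose G3 := fun a b => N%:R^-1 * \sum_(1 <= c < N.+1) w a b c ^+ 2 + 2 * TV3 a b.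
have gge : forall (k : R) (A T : R), 0 <= k -> 0 <= A -> 0 <= T -> 0 <= k * A + 2 * T.
  by move=> k A T hk hA hT; rewrite addr_ge0 // mulr_ge0.
have hG1 : forall b c, 0 <= G1 b c.
  move=> b c; apply: gge; rewrite ?invr_ge0 ?ler0n //; apply: sumr_ge0 => *.
    exact: exprn_ge0.
  by [].
have hG2 : forall a c, 0 <= G2 a c.
  move=> b c; apply: gge; rewrite ?invr_ge0 ?ler0n //; apply: sumr_ge0 => *.
    exact: exprn_ge0.
  by [].
have hG3 : forall a b, 0 <= G3 a b.
  move=> b c; apply: gge; rewrite ?invr_ge0 ?ler0n //; apply: sumr_ge0 => *.
    exact: exprn_ge0.
  by [].
have stepB : forall a b c, (1 <= a < N.+1)%N -> (1 <= b < N.+1)%N -> (1 <= c < N.+1)%N ->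
    w a b c ^+ 3 <= Num.sqrt (G1 b c) * Num.sqrt (G2 a c) * Num.sqrt (G3 a b).
  move=> a b c ha hb hc.
  have h1 : w a b c ^+ 2 <= G1 b c.
    exact: (line_ineq (fun t => w t b c ^+ 2) hN ha).
  have h2 : w a b c ^+ 2 <= G2 a c.
    exact: (line_ineq (fun t => w a t c ^+ 2) hN hb).
  have h3 : w a b c ^+ 2 <= G3 a b.
    exact: (line_ineq (fun t => w a b t ^+ 2) hN hc).
  apply: sq_le_le; first by rewrite !mulr_ge0 // sqrtr_ge0.
  rewrite !exprMn !sqr_sqrtr //.
  rewrite mulrA.
  have h0 : 0 <= w a b c ^+ 2 by apply: sqr_ge0.
  apply: ler_pM => //; first by rewrite mulr_ge0.
  by apply: ler_pM.
pose SG1 := \sum_(1 <= b < N.+1) \sum_(1 <= c < N.+1) G1 b c.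
pose SG2 := \sum_(1 <= a < N.+1) \sum_(1 <= c < N.+1) G2 a c.
pose SG3 := \sum_(1 <= a < N.+1) \sum_(1 <= b < N.+1) G3 a b.
have stepC : P <= Num.sqrt SG1 * Num.sqrt SG2 * Num.sqrt SG3.
  apply: le_trans (_ : \sum_(1 <= a < N.+1) \sum_(1 <= b < N.+1) \sum_(1 <= c < N.+1)
      Num.sqrt (G1 b c) * Num.sqrt (G2 a c) * Num.sqrt (G3 a b) <= _).
    rewrite /P /isum; apply: ler_sum_nat => a ha; apply: ler_sum_nat => b hb.
    apply: ler_sum_nat => c hc; exact: stepB.
  have := @LW R (index_iota 1 N.+1) (fun b c => Num.sqrt (G1 b c)) (fun a c => Num.sqrt (G2 a c))
     (fun a b => Num.sqrt (G3 a b)) (fun _ _ => sqrtr_ge0 _) (fun _ _ => sqrtr_ge0 _)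
     (fun _ _ => sqrtr_ge0 _).
  have e1 : \sum_(b <- index_iota 1 N.+1) \sum_(c <- index_iota 1 N.+1) Num.sqrt (G1 b c) ^+ 2 = SG1.
    by apply: eq_bigr => b _; apply: eq_bigr => c _; rewrite sqr_sqrtr.
  have e2 : \sum_(b <- index_iota 1 N.+1) \sum_(c <- index_iota 1 N.+1) Num.sqrt (G2 b c) ^+ 2 = SG2.
    by apply: eq_bigr => b _; apply: eq_bigr => c _; rewrite sqr_sqrtr.
  have e3 : \sum_(b <- index_iota 1 N.+1) \sum_(c <- index_iota 1 N.+1) Num.sqrt (G3 b c) ^+ 2 = SG3.
    by apply: eq_bigr => b _; apply: eq_bigr => c _; rewrite sqr_sqrtr.
  by rewrite e1 e2 e3.
have hQ : Q <= Num.sqrt P * Num.sqrt S1.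
  rewrite /Q /P /S1 /isum.
  apply: cs_sum => [a|a|a]; [by apply: sumr_ge0 => *; apply: sumr_ge0 => *; apply: exprn_ge0
     | by apply: sumr_ge0 => *; apply: sumr_ge0 => * |].
  apply: cs_sum => [b|b|b]; [by apply: sumr_ge0 => *; apply: exprn_ge0
     | by apply: sumr_ge0 => * |].
  apply: cs_sum => [c|c|c]; [by apply: exprn_ge0 | by [] |].
  rewrite -sqrtrM ?exprn_ge0 //.
  have -> : w a b c ^+ 3 * w a b c = (w a b c ^+ 2) ^+ 2 by rewrite -exprSr -exprM.
  by rewrite sqrtr_sqr ger0_norm // sqr_ge0.
pose D0 := Num.sqrt S1 / N%:R + 8 * Num.sqrt E.
have hD0 : 0 <= D0 by rewrite addr_ge0 ?divr_ge0 ?mulr_ge0 ?sqrtr_ge0 // ler0n.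
have hsP := sqrtr_ge0 P.
have hsS := sqrtr_ge0 S1.
have hsE := sqrtr_ge0 E.
have comb : forall X T, X = Q -> T <= 4 * Num.sqrt P * Num.sqrt E ->
    N%:R^-1 * X + 2 * T <= Num.sqrt P * D0.
  move=> X T -> hT.
  have h1 : N%:R^-1 * Q <= N%:R^-1 * (Num.sqrt P * Num.sqrt S1).
    by apply: ler_wpM2l; rewrite ?invr_ge0 ?ler0n.
  rewrite /D0; lra.
have hSG1 : SG1 <= Num.sqrt P * D0.
  rewrite /SG1 /G1 split2; apply: comb.
    by rewrite reord_yzx.
  have := tv_bound N f; rewrite /wf /= => h; apply: le_trans h _.
  have e3 : \sum_(1 <= b < N.+1) \sum_(1 <= c < N.+1) \sum_(1 <= a < N.+1) vdot (f a b c) (f a b c) ^+ 3 = P.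
    by rewrite reord_yzx.
  have e4 : \sum_(1 <= b < N.+1) \sum_(1 <= c < N.+1) \sum_(1 <= a < N) ex2 f a b c <= E.
    by rewrite reord_yzx; apply: ex2_le.
  rewrite e3; apply: ler_wpM2l; first by rewrite mulr_ge0.
  by rewrite ler_sqrt.
have hSG2 : SG2 <= Num.sqrt P * D0.
  rewrite /SG2 /G2 split2; apply: comb.
    by rewrite reord_xzy.
  have := tv_bound N (fun b a c => f a b c); rewrite /wf /= => h; apply: le_trans h _.
  have e3 : \sum_(1 <= a < N.+1) \sum_(1 <= c < N.+1) \sum_(1 <= b < N.+1) vdot (f a b c) (f a b c) ^+ 3 = P.
    by rewrite reord_xzy.
  have e4 : \sum_(1 <= a < N.+1) \sum_(1 <= c < N.+1) \sum_(1 <= b < N) ey2 f a b c <= E.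
    by rewrite reord_xzy; apply: ey2_le.
  rewrite e3; apply: ler_wpM2l; first by rewrite mulr_ge0.
  by rewrite ler_sqrt.
have hSG3 : SG3 <= Num.sqrt P * D0.
  rewrite /SG3 /G3 split2; apply: comb; first by [].
  have := tv_bound N (fun c a b => f a b c); rewrite /wf /= => h; apply: le_trans h _.
  have e4 : \sum_(1 <= a < N.+1) \sum_(1 <= b < N.+1) \sum_(1 <= c < N) ez2 f a b c <= E.
    by apply: ez2_le.
  apply: ler_wpM2l; first by rewrite mulr_ge0.
  by rewrite ler_sqrt.
pose rho := Num.sqrt (Num.sqrt P).
pose sig := Num.sqrt D0.
have hrho : 0 <= rho by apply: sqrtr_ge0.
have hsig : 0 <= sig by apply: sqrtr_ge0.
have eP : P = rho ^+ 4.
  by rewrite /rho -[4%N]/(2 * 2)%N exprM !sqr_sqrtr.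
have eD : D0 = sig ^+ 2 by rewrite sqr_sqrtr.
have hsq : forall X, X <= Num.sqrt P * D0 -> Num.sqrt X <= rho * sig.
  move=> X hX; rewrite /rho /sig -sqrtrM //.
  by rewrite ler_sqrt // mulr_ge0.
have hSGge : forall X, 0 <= Num.sqrt X by move=> X; apply: sqrtr_ge0.
have stepE : rho ^+ 4 <= rho ^+ 3 * sig ^+ 3.
  rewrite -eP; apply: le_trans stepC _.
  have -> : rho ^+ 3 * sig ^+ 3 = rho * sig * (rho * sig) * (rho * sig) by ring.
  apply: ler_pM.
  - by rewrite mulr_ge0 // sqrtr_ge0.
  - exact: sqrtr_ge0.
  - apply: ler_pM; [exact: sqrtr_ge0|exact: sqrtr_ge0|exact: hsq|exact: hsq].
  - exact: hsq.
have stepF : rho <= sig ^+ 3.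
  have [->|rpos] := eqVneq rho 0; first by rewrite exprn_ge0.
  have rp : 0 < rho by rewrite lt_def rpos hrho.
  have : rho ^+ 3 * rho <= rho ^+ 3 * sig ^+ 3 by rewrite -exprSr.
  by rewrite ler_pM2l // exprn_gt0.
have stepG : P <= D0 ^+ 6.
  rewrite eP eD -exprM.
  have -> : (2 * 6)%N = (3 * 4)%N by [].
  by rewrite exprM ler_pXn2r // ?nnegrE ?exprn_ge0.
have hwp : w x y z ^+ 3 <= P.
  rewrite /P /isum.
  apply: le_trans (_ : \sum_(1 <= c < N.+1) w x y c ^+ 3 <= _).
    by apply: (term_le_sum (F := fun c => w x y c ^+ 3)) => // c; apply: exprn_ge0.
  apply: le_trans (_ : \sum_(1 <= b < N.+1) \sum_(1 <= c < N.+1) w x b c ^+ 3 <= _).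
    apply: (term_le_sum (F := fun b => \sum_(1 <= c < N.+1) w x b c ^+ 3)); first by rewrite ltnS.
    by move=> b; apply: sumr_ge0 => *; apply: exprn_ge0.
  apply: (term_le_sum (F := fun a => \sum_(1 <= b < N.+1) \sum_(1 <= c < N.+1) w a b c ^+ 3)).
    by rewrite ltnS.
  by move=> a; apply: sumr_ge0 => *; apply: sumr_ge0 => *; apply: exprn_ge0.
have : w x y z ^+ 3 <= (D0 ^+ 2) ^+ 3.
  by rewrite -exprM; apply: le_trans hwp stepG.
by rewrite ler_pXn2r // ?nnegrE ?exprn_ge0.
Qed.
End Sob2.
Section Main.
Variable R : realType.

Lemma powR8 (k : R) (n : nat) : 0 <= k -> k `^ (n%:R / 8) = (k `^ (1/8)) ^+ n.
Proof.
move=> hk; rewrite -powR_mulrn ?powR_ge0 // -powRrM; congr (_ `^ _).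
by rewrite mul1r mulrC.
Qed.

Lemma isum_lin N (F G : nat -> nat -> nat -> R) (a b : R) :
  isum N (fun i j l => a * F i j l + b * G i j l) = a * isum N F + b * isum N G.
Proof.
rewrite /isum !mulr_sumr -big_split; apply: eq_bigr => i _.
rewrite !mulr_sumr -big_split; apply: eq_bigr => j _.
by rewrite !mulr_sumr -big_split.
Qed.

Lemma isum_scale N (F : nat -> nat -> nat -> R) (a : R) :
  isum N (fun i j l => a * F i j l) = a * isum N F.
Proof.
rewrite /isum !mulr_sumr; apply: eq_bigr => i _.
rewrite !mulr_sumr; apply: eq_bigr => j _.
by rewrite !mulr_sumr.
Qed.

Lemma isum_abs N (F G : nat -> nat -> nat -> R) :
  (forall i j l, (1 <= i <= N)%N -> (1 <= j <= N)%N -> (1 <= l <= N)%N -> `|F i j l| <= G i j l) ->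
  `|isum N F| <= isum N G.
Proof.
move=> h; apply: le_trans (ler_norm_sum _ _ _) _.
apply: ler_sum_nat => i hi.
apply: le_trans (ler_norm_sum _ _ _) _.
apply: ler_sum_nat => j hj.
apply: le_trans (ler_norm_sum _ _ _) _.
apply: ler_sum_nat => l hl.
exact: h.
Qed.

Lemma imax_ge N (F : nat -> nat -> nat -> R) i j l :
  (1 <= i <= N)%N -> (1 <= j <= N)%N -> (1 <= l <= N)%N -> F i j l <= imax N F.
Proof.
move=> hi hj hl; rewrite /imax.
apply: le_trans (_ : \big[Num.max/0]_(1 <= l' < N.+1) F i j l' <= _).
  by apply: (le_bigmax_seq _ l); rewrite ?mem_index_iota.
apply: le_trans (_ : \big[Num.max/0]_(1 <= j' < N.+1) \big[Num.max/0]_(1 <= l' < N.+1) F i j' l' <= _).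
  by apply: (le_bigmax_seq _ j _ (fun j' => \big[Num.max/0]_(1 <= l' < N.+1) F i j' l')); rewrite ?mem_index_iota.
by apply: (le_bigmax_seq _ i _ (fun i' => \big[Num.max/0]_(1 <= j' < N.+1) \big[Num.max/0]_(1 <= l' < N.+1) F i' j' l')); rewrite ?mem_index_iota.
Qed.
End Main.

Lemma te_bound (R : realType) (N : nat) (f : gridfun R) (r C2 : R) i j l :
  (0 < N)%N -> 0 < r -> r <= 1 -> N%:R * r ^+ 8 <= C2 ->
  (1 <= i <= N)%N -> (1 <= j <= N)%N -> (1 <= l <= N)%N ->
  norm2 N f <= 2 * r ^+ 15 -> gnorm2 N f <= 2^-1 * r ^+ 11 ->
  vnorm (f i j l) <= 6 * Num.sqrt C2 * r ^+ 7.
Proof.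
move=> hN hr hr1 hNC hi hj hl hA hB.
have hNr : 0 < (N%:R : R) by rewrite ltr0n.
have C2ge : 0 <= C2 by apply: le_trans hNC; rewrite mulr_ge0 ?ler0n ?exprn_ge0 // ltW.
have hs := sobolev f hN hi hj hl.
set A := norm2 N f; set B := gnorm2 N f.
have hA0 : 0 <= A by apply: sqrtr_ge0.
have hB0 : 0 <= B by apply: sqrtr_ge0.
have hmesh : meshh R N = N%:R^-1 by [].
have eS : isum N (wf f) = (N%:R * Num.sqrt N%:R * A) ^+ 2.
  rewrite !exprMn sqr_sqrtr ?ler0n // /A /norm2 sqr_sqrtr; last first.
    rewrite /gdot mulr_ge0 ?exprn_ge0 ?hmesh ?invr_ge0 ?ler0n //.
    by apply: sum3_ge0 => *; apply: vdot_ge0.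
  rewrite /gdot hmesh -exprSr exprVn mulrA mulfV ?mul1r //.
  by rewrite expf_neq0 // gt_eqF.
have eE : Esum N f = (Num.sqrt N%:R * B) ^+ 2.
  rewrite exprMn sqr_sqrtr ?ler0n // /B /gnorm2 sqr_sqrtr; last first.
    rewrite mulr_ge0 ?exprn_ge0 ?hmesh ?invr_ge0 ?ler0n //.
    by apply: sum3_ge0 => *; rewrite /gradsq !addr_ge0 // vdot_ge0.
  have -> : isum N (gradsq N f) = isum N (fun x y z => N%:R ^+ 2 * (ex2 f x y z + ey2 f x y z + ez2 f x y z)).
    apply: eq_bigr => x _; apply: eq_bigr => y _; apply: eq_bigr => z _.
    by rewrite /gradsq /Dx /Dy /Dz !vdotZl !vdotZr hmesh invrK /ex2 /ey2 /ez2; ring.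
  rewrite isum_scale hmesh -/(Esum N f).
  rewrite exprVn; field.
  by rewrite gt_eqF.
rewrite eS eE !sqrtr_sqr !ger0_norm ?mulr_ge0 ?sqrtr_ge0 ?ler0n // in hs.
have eD : N%:R * Num.sqrt N%:R * A / N%:R + 8 * (Num.sqrt N%:R * B) = Num.sqrt N%:R * (A + 8 * B).
  by field; rewrite gt_eqF.
rewrite eD exprMn sqr_sqrtr ?ler0n // in hs.
apply: sq_le_le; first by rewrite !mulr_ge0 ?sqrtr_ge0 ?exprn_ge0 // ltW.
rewrite vnorm_sq.
apply: le_trans hs _.
have hAB : A + 8 * B <= 6 * r ^+ 11.
  have : r ^+ 15 <= r ^+ 11.
    by rewrite -[15%N]/(4 + 11)%N exprD ger_pMl ?exprn_gt0 // exprn_ile1 // ltW.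
  have e2 : (2:R)^-1 * r ^+ 11 = r ^+ 11 / 2 by rewrite mulrC.
  rewrite e2 in hB; move=> h; rewrite /A /B; lra.
have hAB0 : 0 <= A + 8 * B by lra.
have h2 : (A + 8 * B) ^+ 2 <= (6 * r ^+ 11) ^+ 2.
  by rewrite ler_pXn2r // ?nnegrE // mulr_ge0 // exprn_ge0 // ltW.
apply: le_trans (ler_wpM2l (ltW hNr) h2) _.
have e3 : (6 * Num.sqrt C2 * r ^+ 7) ^+ 2 = 36 * r ^+ 14 * C2.
  by rewrite !exprMn sqr_sqrtr //; ring.
have e4 : N%:R * (6 * r ^+ 11) ^+ 2 = 36 * r ^+ 14 * (N%:R * r ^+ 8) :> R by ring.
rewrite e3 e4; by apply: ler_wpM2l => //; rewrite mulr_ge0 ?exprn_ge0 // ltW.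
Qed.
Unset Implicit Arguments.
Theorem mainTheorem4 (R : realType) (Cs C1 C2 : R) :
  0 < Cs -> 0 < C1 -> 0 < C2 ->
  exists k0 : R, exists h0 : R, 0 < k0 /\ 0 < h0 /\
  forall (N : nat) (k : R) (mu1 mu2 mt1 mt2 : gridfun R),
    (0 < N)%N -> meshh R N < h0 -> k < k0 ->
    inX N mu1 -> inX N mu2 -> inX N mt1 -> inX N mt2 ->
    unit_length N mu1 -> unit_length N mu2 ->
    normInf N mu1 + gnormInf N mu1 <= Cs ->
    normInf N mu2 + gnormInf N mu2 <= Cs ->
    C1 * meshh R N <= k -> k <= C2 * meshh R N ->
    norm2 N (gsub mu1 mt1) <= 2 * k `^ (15 / 8) ->
    norm2 N (gsub mu2 mt2) <= 2 * k `^ (15 / 8) ->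
    gnorm2 N (gsub mu1 mt1) <= 2^-1 * k `^ (11 / 8) ->
    gnorm2 N (gsub mu2 mt2) <= 2^-1 * k `^ (11 / 8) ->
    normInf N (gsub mu1 mu2) <= 4^-1 * k `^ (7 / 8) ->
    let e1 := gsub mu1 (normalize mt1) in
    let e2 := gsub mu2 (normalize mt2) in
    let te1 := gsub mu1 mt1 in
    `| gdot N (gsub te1 e1) e2 |
      <= k `^ (5 / 4) * norm2 N e2 ^+ 2 + k `^ (1 / 4) * norm2 N (gsub te1 e1) ^+ 2.
Proof.
move=> hCs hC1 hC2.
pose c2s := Num.sqrt C2.
have hc2s : 0 <= c2s by apply: sqrtr_ge0.
pose K := 30 * c2s + 1.
have hK : 1 <= K by rewrite /K lerDr mulr_ge0.
have hK0 : 0 < K by lra.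
pose rho := K^-1.
have hrho : 0 < rho by rewrite invr_gt0.
have hrho1 : rho <= 1 by rewrite invr_le1 // ?unitfE ?gt_eqF.
exists (rho ^+ 8), 1; split; first by rewrite exprn_gt0.
split; first by [].
move=> N k mu1 mu2 mt1 mt2 hN hh hk _ _ _ _ hu1 hu2 _ _ hk1 hk2 hA1 hA2 hB1 hB2 hmu.
cbv zeta.
have hNr : 0 < (N%:R : R) by rewrite ltr0n.
have hmesh : meshh R N = N%:R^-1 by [].
have hk0 : 0 < k.
  by apply: lt_le_trans hk1; rewrite mulr_gt0 // hmesh invr_gt0.
pose r := k `^ (1/8).
have hr : 0 < r by apply: powR_gt0.
have e15 : k `^ (15/8) = r ^+ 15 := powR8 15 (ltW hk0).
have e11 : k `^ (11/8) = r ^+ 11 := powR8 11 (ltW hk0).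
have e7 : k `^ (7/8) = r ^+ 7 := powR8 7 (ltW hk0).
have e54 : k `^ (5/4) = r ^+ 10.
  by rewrite (_ : 5/4 = 10%:R/8); [exact: powR8 (ltW hk0) | lra].
have e14 : k `^ (1/4) = r ^+ 2.
  by rewrite (_ : 1/4 = 2%:R/8); [exact: powR8 (ltW hk0) | lra].
have ek : k = r ^+ 8.
  rewrite -(powR8 8 (ltW hk0)) (_ : 8%:R / 8 = 1) ?powRr1 //; last by lra.
  exact: ltW.
rewrite e15 in hA1 hA2; rewrite e11 in hB1 hB2; rewrite e7 in hmu.
rewrite e54 e14.
have hrr : r < rho.
  have : r ^+ 8 < rho ^+ 8 by rewrite -ek.
  by rewrite ltr_pXn2r // ?nnegrE ltW.
have hr1 : r <= 1 by apply: ltW; apply: lt_le_trans hrr hrho1.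
have hNC : N%:R * r ^+ 8 <= C2.
  rewrite -ek.
  have : N%:R * k <= N%:R * (C2 * meshh R N) by apply: ler_wpM2l; rewrite ?ler0n.
  by rewrite hmesh mulrCA mulfV ?gt_eqF // mulr1.
have hKr : K * r < 1.
  have : K * r < K * rho by rewrite ltr_pM2l.
  by rewrite /rho mulfV ?gt_eqF.
pose d := 6 * c2s * r ^+ 7.
have r6 : r ^+ 6 <= 1 by rewrite exprn_ile1 // ltW.
have r60 : 0 <= r ^+ 6 by rewrite exprn_ge0 // ltW.
have er7 : r ^+ 7 = r * r ^+ 6 by rewrite exprS.
have hKr6 : K * r * r ^+ 6 <= r ^+ 6.
  by rewrite ger_pMl ?ltW // exprn_gt0.
have hd1 : d <= 1/5.
  have : 6 * c2s * r * r ^+ 6 <= K * r * r ^+ 6 / 5.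
    rewrite /K; nra.
  rewrite /d er7; lra.
have hd2 : 5 * d + r ^+ 7 / 4 <= 2 * r ^+ 6.
  have : (30 * c2s + 1/4) * r * r ^+ 6 <= K * r * r ^+ 6.
    rewrite /K; nra.
  rewrite /d er7; lra.
have hpt : forall i j l, (1 <= i <= N)%N -> (1 <= j <= N)%N -> (1 <= l <= N)%N ->
   `|vdot (gsub (gsub mu1 mt1) (gsub mu1 (normalize mt1)) i j l)
          (gsub mu2 (normalize mt2) i j l)|
   <= r ^+ 10 * vdot (gsub mu2 (normalize mt2) i j l) (gsub mu2 (normalize mt2) i j l)
      + r ^+ 2 * vdot (gsub (gsub mu1 mt1) (gsub mu1 (normalize mt1)) i j l)
                      (gsub (gsub mu1 mt1) (gsub mu1 (normalize mt1)) i j l).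
  move=> i j l hi hj hl.
  have hi' : (i <= N.+1)%N by apply: leqW; case/andP: hi.
  have hj' : (j <= N.+1)%N by apply: leqW; case/andP: hj.
  have hl' : (l <= N.+1)%N by apply: leqW; case/andP: hl.
  apply: (pointwise (u := mu1 i j l) (t := mt1 i j l) (v := mu2 i j l) (s := mt2 i j l) (r := r) (d := d)).
  - exact: hu1.
  - exact: hu2.
  - exact: (te_bound (f := gsub mu1 mt1) hN hr hr1 hNC hi hj hl hA1 hB1).
  - exact: (te_bound (f := gsub mu2 mt2) hN hr hr1 hNC hi hj hl hA2 hB2).
  - have := imax_ge (fun a b c => vnorm (gsub mu1 mu2 a b c)) hi hj hl.
    move=> h; apply: le_trans h _; apply: le_trans hmu _; lra.
  - exact: hr.
  - exact: hd1.
  - exact: hd2.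
rewrite /norm2 !sqr_sqrtr; last first.
  rewrite /gdot mulr_ge0 ?exprn_ge0 ?hmesh ?invr_ge0 ?ler0n //.
  by apply: sum3_ge0 => *; apply: vdot_ge0.
  rewrite /gdot mulr_ge0 ?exprn_ge0 ?hmesh ?invr_ge0 ?ler0n //.
  by apply: sum3_ge0 => *; apply: vdot_ge0.
rewrite /gdot normrM ger0_norm; last by rewrite exprn_ge0 // hmesh invr_ge0 ler0n.
apply: le_trans (ler_wpM2l _ (isum_abs hpt)) _.
  by rewrite exprn_ge0 // hmesh invr_ge0 ler0n.
rewrite isum_lin le_eqVlt; apply/orP; left; apply/eqP; ring.
Qed.
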